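(* For every set of formulas $\Gamma$ and every formula $\alpha$: $\Gamma\vdash_{L_1^2}\alpha$ if and only if $\Gamma\vDash_{\mathcal{M}_1^2}\alpha$.
   Context: Formulas are built from a countable set of propositional variables using unary $\neg,\circ$ and binary $\land,\lor,\to$; $\circ^0\alpha=\alpha$, $\circ^{m+1}\alpha=\circ(\circ^m\alpha)$, $\alpha\leftrightarrow\beta:=(\alpha\to\beta)\land(\beta\to\alpha)$. mbC is the Hilbert calculus with the axiom schemas of a standard axiomatization of positive classical propositional logic in $\land,\lor,\to$, plus (TND) $\alpha\lor\neg\alpha$ and (bc1) $\circ\alpha\to(\alpha\to(\neg\alpha\to\beta))$, with modus ponens as only rule; mbCciw is mbC plus (ciw) $\circ\alpha\lor(\alpha\land\neg\alpha)$; $L_1^0$ is mbCciw plus $\circ\circ\circ\alpha$; $L_1^1$ is $L_1^0$ plus $\neg\neg\alpha\to\alpha$ and $\alpha\to\neg\neg\alpha$; $L_1^2$ is $L_1^1$ plus $\neg\circ\neg\alpha\leftrightarrow\neg\circ\alpha$. $\Gamma\vdash_L\alpha$ means derivability in $L$. Semantics: with Boolean operations $\land,\lor,\to,\sim$ on $\{0,1\}$, let $\mathbb{B}_1^0=\{x\in\{0,1\}^3: x_1\lor x_2=1,\ x_3\lor\sim(x_1\land x_2)=1\}$. The multialgebra $\mathcal{B}_1^2$ on $\mathbb{B}_1^0$ has $x\# y=\{z\in\mathbb{B}_1^0: z_1=x_1\# y_1\}$ for $\#\in\{\land,\lor,\to\}$, $\neg x=\{(x_2,x_1,x_3)\}$,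 $\circ x=\{(\sim(x_1\land x_2),x_3,x_3\land\sim(x_1\land x_2))\}$. $D_1^0=\{x:x_1=1\}$, $\mathcal{M}_1^2=(\mathcal{B}_1^2,D_1^0)$. Valuations over $\mathcal{M}_1^2$ are maps $h$ from formulas to $\mathbb{B}_1^0$ with $h(\alpha\#\beta)\in h(\alpha)\#h(\beta)$, $h(\neg\alpha)\in\neg h(\alpha)$, $h(\circ\alpha)\in\circ h(\alpha)$; $\Gamma\vDash_{\mathcal{M}_1^2}\alpha$ iff every valuation $h$ with $h[\Gamma]\subseteq D_1^0$ has $h(\alpha)\in D_1^0$. *)

(* Defs.v *)
From Stdlib Require Import Bool.

Inductive formula : Type :=
| Var  : nat -> formula
| Neg  : formula -> formula
| Circ : formula -> formula
| And  : formula -> formula -> formula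
| Or   : formula -> formula -> formula
| Imp  : formula -> formula -> formula.

Definition Iff (a b : formula) : formula := And (Imp a b) (Imp b a).

Fixpoint circ_n (m : nat) (a : formula) : formula :=
  match m with O => a | S m' => Circ (circ_n m' a) end.

(* Axiom schemas of L_1^2. Positive classical logic: the standard
   axiomatization Ax1--Ax9 used for mbC (Carnielli--Coniglio). *)
Inductive axiom_L12 : formula -> Prop :=
| Ax1 a b : axiom_L12 (Imp a (Imp b a))
| Ax2 a b c : axiom_L12 (Imp (Imp a b) (Imp (Imp a (Imp b c)) (Imp a c)))
| Ax3 a b : axiom_L12 (Imp a (Imp b (And a b)))
| Ax4 a b : axiom_L12 (Imp (And a b) a)
| Ax5 a b : axiom_L12 (Imp (And a b) b)
| Ax6 a b : axiom_L12 (Imp a (Or a b))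
| Ax7 a b : axiom_L12 (Imp b (Or a b))
| Ax8 a b c : axiom_L12 (Imp (Imp a c) (Imp (Imp b c) (Imp (Or a b) c)))
| Ax9 a b : axiom_L12 (Or a (Imp a b))
| AxTND a : axiom_L12 (Or a (Neg a))
| AxBc1 a b : axiom_L12 (Imp (Circ a) (Imp a (Imp (Neg a) b)))
| AxCiw a : axiom_L12 (Or (Circ a) (And a (Neg a)))
| AxCCC a : axiom_L12 (circ_n 3 a)
| AxCf a : axiom_L12 (Imp (Neg (Neg a)) a)
| AxCe a : axiom_L12 (Imp a (Neg (Neg a)))
| AxNCN a : axiom_L12 (Iff (Neg (Circ (Neg a))) (Neg (Circ a))).

Inductive derivable_L12 (Gamma : formula -> Prop) : formula -> Prop :=
| D_hyp a : Gamma a -> derivable_L12 Gamma a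
| D_ax a : axiom_L12 a -> derivable_L12 Gamma a
| D_mp a b : derivable_L12 Gamma a -> derivable_L12 Gamma (Imp a b) ->
             derivable_L12 Gamma b.

(* Truth values: triples in {0,1}^3, 1 = true. *)
Definition tv : Type := (bool * bool * bool)%type.
Definition t1 (x : tv) : bool := let '(a, _, _) := x in a.
Definition t2 (x : tv) : bool := let '(_, b, _) := x in b.
Definition t3 (x : tv) : bool := let '(_, _, c) := x in c.

Definition inB (x : tv) : Prop :=
  (t1 x || t2 x) = true /\ (t3 x || negb (t1 x && t2 x)) = true.

(* Multioperations of B_1^2, as membership predicates z \in x # y etc. *)
Definition mand (x y z : tv) : Prop := inB z /\ t1 z = (t1 x && t1 y).
Definition mor  (x y z : tv) : Prop := inB z /\ t1 z = (t1 x || t1 y).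
Definition mimp (x y z : tv) : Prop := inB z /\ t1 z = implb (t1 x) (t1 y).
Definition mneg (x z : tv) : Prop := z = (t2 x, t1 x, t3 x).
Definition mcirc (x z : tv) : Prop :=
  z = (negb (t1 x && t2 x), t3 x, t3 x && negb (t1 x && t2 x)).

Definition designated (x : tv) : Prop := t1 x = true.

Definition valuation (h : formula -> tv) : Prop :=
  (forall a, inB (h a)) /\
  (forall a b, mand (h a) (h b) (h (And a b))) /\
  (forall a b, mor (h a) (h b) (h (Or a b))) /\
  (forall a b, mimp (h a) (h b) (h (Imp a b))) /\
  (forall a, mneg (h a) (h (Neg a))) /\
  (forall a, mcirc (h a) (h (Circ a))).

Definition entails_M12 (Gamma : formula -> Prop) (a : formula) : Prop :=
  forall h, valuation h ->
    (forall g, Gamma g -> designated (h g)) -> designated (h a).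

(* Main.v *)
Require Import Defs.
From Stdlib Require Import Bool Arith Lia Classical ClassicalEpsilon Cantor.

Section Sound.
Variable h : formula -> tv.
Hypothesis Hv : valuation h.

Lemma hIn a : inB (h a). Proof. apply Hv. Qed.
Lemma hA a b : t1 (h (And a b)) = t1 (h a) && t1 (h b). Proof. apply Hv. Qed.
Lemma hO a b : t1 (h (Or a b)) = t1 (h a) || t1 (h b). Proof. apply Hv. Qed.
Lemma hI a b : t1 (h (Imp a b)) = implb (t1 (h a)) (t1 (h b)). Proof. apply Hv. Qed.
Lemma hN1 a : t1 (h (Neg a)) = t2 (h a).
Proof. destruct Hv as (_&_&_&_&H&_). rewrite (H a). reflexivity. Qed.
Lemma hN2 a : t2 (h (Neg a)) = t1 (h a).
Proof. destruct Hv as (_&_&_&_&H&_). rewrite (H a). reflexivity. Qed.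
Lemma hN3 a : t3 (h (Neg a)) = t3 (h a).
Proof. destruct Hv as (_&_&_&_&H&_). rewrite (H a). reflexivity. Qed.
Lemma hC1 a : t1 (h (Circ a)) = negb (t1 (h a) && t2 (h a)).
Proof. destruct Hv as (_&_&_&_&_&H). rewrite (H a). reflexivity. Qed.
Lemma hC2 a : t2 (h (Circ a)) = t3 (h a).
Proof. destruct Hv as (_&_&_&_&_&H). rewrite (H a). reflexivity. Qed.
Lemma hC3 a : t3 (h (Circ a)) = t3 (h a) && negb (t1 (h a) && t2 (h a)).
Proof. destruct Hv as (_&_&_&_&_&H). rewrite (H a). reflexivity. Qed.

Lemma ax_sound a : axiom_L12 a -> t1 (h a) = true.
Proof.
  intro Ha; destruct Ha; unfold Iff; simpl circ_n;
  repeat (rewrite ?hA, ?hO, ?hI, ?hN1, ?hN2, ?hN3, ?hC1, ?hC2, ?hC3);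
  repeat match goal with |- context [h ?x] =>
    let H := fresh in pose proof (hIn x) as H;
    destruct (h x) as [[? ?] ?]; unfold inB in H; simpl in H end;
  simpl;
  repeat match goal with b : bool |- _ => destruct b end;
  simpl in *; intuition discriminate.
Qed.
End Sound.

Lemma soundness G a : derivable_L12 G a -> entails_M12 G a.
Proof.
  intros D h Hv HG. induction D.
  - auto.
  - apply ax_sound; auto.
  - unfold designated in *. rewrite (hI h Hv) in IHD2. rewrite IHD1 in IHD2.
    exact IHD2.
Qed.

Fixpoint enc (f : formula) : nat :=
  match f with
  | Var n => Cantor.to_nat (0, n)
  | Neg a => Cantor.to_nat (1, enc a)
  | Circ a => Cantor.to_nat (2, enc a)
  | And a b => Cantor.to_nat (3, Cantor.to_nat (enc a, enc b))
  | Or a b => Cantor.to_nat (4, Cantor.to_nat (enc a, enc b))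
  | Imp a b => Cantor.to_nat (5, Cantor.to_nat (enc a, enc b))
  end.

Lemma to_nat_inj p q : Cantor.to_nat p = Cantor.to_nat q -> p = q.
Proof.
  intro H. rewrite <- (cancel_of_to p), <- (cancel_of_to q), H. reflexivity.
Qed.

Lemma enc_inj f g : enc f = enc g -> f = g.
Proof.
  revert g; induction f; intros g H; destruct g; cbn [enc] in H;
  apply to_nat_inj, pair_equal_spec in H; destruct H as [H0 H]; try discriminate;
  try (apply to_nat_inj, pair_equal_spec in H; destruct H as [H H']);
  f_equal; auto.
Qed.

Definition add (G : formula -> Prop) (p : formula) : formula -> Prop :=
  fun x => G x \/ x = p.

Lemma der_mono G H a : derivable_L12 G a -> (forall x, G x -> H x) ->
  derivable_L12 H a.
Proof.
  intros D Hs; induction D.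
  - apply D_hyp; auto.
  - apply D_ax; auto.
  - eapply D_mp; [exact IHD1|exact IHD2].
Qed.

Lemma der_cut G p b : derivable_L12 (add G p) b -> derivable_L12 G p ->
  derivable_L12 G b.
Proof.
  intros D Hp; induction D.
  - destruct H; [apply D_hyp; auto | subst; auto].
  - apply D_ax; auto.
  - eapply D_mp; [exact IHD1|exact IHD2].
Qed.

Lemma der_id G p : derivable_L12 G (Imp p p).
Proof.
  eapply D_mp. apply D_ax, (Ax1 p (Imp p p)).
  eapply D_mp. apply D_ax, (Ax1 p p).
  apply D_ax, (Ax2 p (Imp p p) p).
Qed.

Lemma deduction G p b : derivable_L12 (add G p) b ->
  derivable_L12 G (Imp p b).
Proof.
  intros D; induction D.
  - destruct H.
    + eapply D_mp. apply D_hyp; eauto. apply D_ax, Ax1.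
    + subst; apply der_id.
  - eapply D_mp. apply D_ax; eauto. apply D_ax, Ax1.
  - eapply D_mp. exact IHD2. eapply D_mp. exact IHD1. apply D_ax, Ax2.
Qed.

Section Lind.
Variable Gamma : formula -> Prop.
Variable alpha : formula.
Hypothesis Hna : ~ derivable_L12 Gamma alpha.

Fixpoint chain (n : nat) : formula -> Prop :=
  match n with
  | O => Gamma
  | S n => fun x => chain n x \/
           (enc x = n /\ ~ derivable_L12 (add (chain n) x) alpha)
  end.

Definition Dl (x : formula) : Prop := exists n, chain n x.

Lemma chain_mono n m x : n <= m -> chain n x -> chain m x.
Proof.
  induction 1; auto. intro; simpl; left; auto.
Qed.

Lemma fin b : derivable_L12 Dl b -> exists n, derivable_L12 (chain n) b.
Proof.
  intro D; induction D.
  - destruct H as [n Hn]. exists n. apply D_hyp; auto.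
  - exists 0. apply D_ax; auto.
  - destruct IHD1 as [n1 H1], IHD2 as [n2 H2]. exists (max n1 n2).
    eapply D_mp.
    + eapply der_mono; [exact H1|]. intros; eapply chain_mono; [|eauto]; lia.
    + eapply der_mono; [exact H2|]. intros; eapply chain_mono; [|eauto]; lia.
Qed.

Lemma chain_nd n : ~ derivable_L12 (chain n) alpha.
Proof.
  induction n; simpl; auto.
  destruct (classic (exists x, enc x = n /\ ~ derivable_L12 (add (chain n) x) alpha))
    as [[x [Hx Hd]]|Hno].
  - intro D; apply Hd. eapply der_mono; [exact D|].
    intros y [Hy|[Hy _]]; [left; auto| right; apply enc_inj; congruence].
  - intro D; apply IHn. eapply der_mono; [exact D|].
    intros y [Hy|Hy]; auto. exfalso; apply Hno; eauto.
Qed.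

Lemma Dl_nd : ~ derivable_L12 Dl alpha.
Proof. intro D; destruct (fin _ D) as [n Hn]; exact (chain_nd n Hn). Qed.

Lemma Dl_max x : ~ Dl x -> derivable_L12 (add Dl x) alpha.
Proof.
  intro Hx. apply NNPP; intro Hd. apply Hx. exists (S (enc x)). simpl. right.
  split; auto. intro D; apply Hd. eapply der_mono; [exact D|].
  intros y [Hy|Hy]; [left; exists (enc x); auto|right; auto].
Qed.

Lemma Dl_closed x : derivable_L12 Dl x -> Dl x.
Proof.
  intro D. apply NNPP; intro Hx. apply Dl_nd. eapply der_cut; eauto.
  apply Dl_max; auto.
Qed.

Lemma Dl_ax a : axiom_L12 a -> Dl a.
Proof. intro; apply Dl_closed, D_ax; auto. Qed.

Lemma Dl_mp a b : Dl a -> Dl (Imp a b) -> Dl b.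
Proof.
  intros H1 H2; apply Dl_closed; eapply D_mp; [apply D_hyp; exact H1|apply D_hyp; exact H2].
Qed.

Lemma Dl_noalpha : ~ Dl alpha.
Proof. intro H; apply Dl_nd, D_hyp; auto. Qed.

Lemma Dl_or a b : Dl (Or a b) <-> Dl a \/ Dl b.
Proof.
  split.
  - intro H. apply NNPP; intro Hn. apply Dl_nd.
    assert (Ha : ~ Dl a) by tauto. assert (Hb : ~ Dl b) by tauto.
    pose proof (deduction _ _ _ (Dl_max _ Ha)). pose proof (deduction _ _ _ (Dl_max _ Hb)).
    eapply D_mp; [apply D_hyp; exact H|].
    eapply D_mp; [exact H1|]. eapply D_mp; [exact H0|].
    apply D_ax, Ax8.
  - intros [H|H]; eapply Dl_mp; eauto; apply Dl_ax; constructor.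
Qed.

Lemma Dl_and a b : Dl (And a b) <-> Dl a /\ Dl b.
Proof.
  split.
  - intro H; split; eapply Dl_mp; eauto; apply Dl_ax; constructor.
  - intros [Ha Hb]. eapply Dl_mp; [exact Hb|]. eapply Dl_mp; [exact Ha|].
    apply Dl_ax; constructor.
Qed.

Lemma Dl_imp a b : Dl (Imp a b) <-> (Dl a -> Dl b).
Proof.
  split.
  - intros; eapply Dl_mp; eauto.
  - intro H. destruct (proj1 (Dl_or a (Imp a b)) (Dl_ax _ (Ax9 a b))) as [Ha|Ha]; auto.
    eapply Dl_mp; [apply H, Ha|]. apply Dl_ax; constructor.
Qed.

Lemma Dl_tnd a : Dl a \/ Dl (Neg a).
Proof. apply Dl_or, Dl_ax; constructor. Qed.

Lemma Dl_expl a : Dl (Circ a) -> Dl a -> Dl (Neg a) -> False.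
Proof.
  intros H1 H2 H3. apply Dl_noalpha.
  eapply Dl_mp; [exact H3|]. eapply Dl_mp; [exact H2|].
  eapply Dl_mp; [exact H1|]. apply Dl_ax; constructor.
Qed.

Lemma Dl_nn a : Dl (Neg (Neg a)) <-> Dl a.
Proof.
  split; intro H; (eapply Dl_mp; [exact H|]); apply Dl_ax; constructor.
Qed.

Lemma Dl_circ a : Dl (Circ a) <-> ~ (Dl a /\ Dl (Neg a)).
Proof.
  split.
  - intros H [H1 H2]; eapply Dl_expl; eauto.
  - intro H. destruct (proj1 (Dl_or _ _) (Dl_ax _ (AxCiw a))) as [Hc|Hc]; auto.
    apply Dl_and in Hc; tauto.
Qed.

Lemma Dl_ncn a : Dl (Neg (Circ (Neg a))) <-> Dl (Neg (Circ a)).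
Proof.
  pose proof (Dl_ax _ (AxNCN a)) as H. unfold Iff in H.
  apply Dl_and in H; destruct H as [H1 H2].
  rewrite Dl_imp in H1, H2. tauto.
Qed.

Lemma Dl_ncc a : Dl (Neg (Circ (Circ a))) <-> Dl (Circ a) /\ Dl (Neg (Circ a)).
Proof.
  pose proof (Dl_ax _ (AxCCC a)) as H. simpl in H.
  pose proof (proj1 (Dl_circ _) H) as H1.
  pose proof (Dl_circ (Circ a)) as H2.
  pose proof (Dl_tnd (Circ (Circ a))).
  tauto.
Qed.

Definition bP (P : Prop) : bool :=
  if excluded_middle_informative P then true else false.

Definition hD (f : formula) : tv :=
  (bP (Dl f), bP (Dl (Neg f)), bP (Dl (Neg (Circ f)))).

Ltac bcase :=
  unfold bP; repeat match goal with |- context [excluded_middle_informative ?P] =>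
    destruct (excluded_middle_informative P) end; simpl.

Lemma hD_in a : inB (hD a).
Proof.
  unfold inB, hD; simpl.
  pose proof (Dl_tnd a). pose proof (Dl_circ a). pose proof (Dl_tnd (Circ a)).
  split; bcase; try reflexivity; tauto.
Qed.

Lemma hD_val : valuation hD.
Proof.
  split; [exact hD_in|]. split; [|split; [|split; [|split]]].
  - intros a b; split; [apply hD_in|].
    unfold hD; simpl. pose proof (Dl_and a b). bcase; try reflexivity; tauto.
  - intros a b; split; [apply hD_in|].
    unfold hD; simpl. pose proof (Dl_or a b). bcase; try reflexivity; tauto.
  - intros a b; split; [apply hD_in|].
    unfold hD; simpl. pose proof (Dl_imp a b). bcase; try reflexivity; tauto.
  - intro a. unfold mneg, hD; simpl. pose proof (Dl_nn a). pose proof (Dl_ncn a).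
    bcase; try reflexivity; tauto.
  - intro a. unfold mcirc, hD; simpl. pose proof (Dl_circ a). pose proof (Dl_ncc a).
    bcase; try reflexivity; tauto.
Qed.

Lemma completeness_aux : ~ entails_M12 Gamma alpha.
Proof.
  intro E. apply Dl_noalpha.
  specialize (E hD hD_val).
  assert (HG : forall g, Gamma g -> designated (hD g)).
  { intros g Hg. unfold designated, hD; simpl. bcase; auto.
    exfalso; apply n; exists 0; auto. }
  specialize (E HG). unfold designated, hD in E; simpl in E.
  revert E; bcase; auto; discriminate.
Qed.
End Lind.

Theorem theorem10 :
  forall (Gamma : formula -> Prop) (alpha : formula),
    derivable_L12 Gamma alpha <-> entails_M12 Gamma alpha.
Proof.
  intros G a; split.
  - apply soundness.
  - intro E. apply NNPP; intro Hn. exact (completeness_aux G a Hn E).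
Qed.
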